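(* Let $N$ be a temporal phylogenetic network. Then $N$ is tree-based if and only if $N$ satisfies the antichain-to-leaf property.
   Context: $X$ is a nonempty finite set. A phylogenetic network on $X$ is a rooted acyclic digraph with no parallel arcs such that: the unique root has out-degree at least one; $X$ is exactly the set of vertices of out-degree zero (leaves), each of in-degree one; every other vertex either has in-degree one and out-degree at least two (a tree vertex) or in-degree at least two and out-degree one (a reticulation). If $|X|=1$, the network may also consist of the single vertex in $X$. An arc ending in a reticulation is a reticulation arc; all other arcs are tree arcs. A phylogenetic network $N$ on $X$ is tree-based if it can be obtained from some phylogenetic $X$-tree (phylogenetic network with no reticulations) $T$ by first taking a subdivision of $T$ (new vertices are attachment points) and then adding new arcs $(u,v)$ where either $u$ and $v$ are both attachment points, or $u$ is a non-leaf vertex of $T$ and $v$ is an attachment point; equivalently, $N$ has a rooted spanning tree with the same root as $N$ all of whose leaves lie in $X$. $N=(V,A)$ is temporal if there is a map $\lambda:V\to\mathbb{R}$ with $\lambda(u)<\lambda(v)$ for every tree arc $(u,v)$ and $\lambda(u)=\lambda(v)$ for every reticulation arc $(u,v)$. An antichain is a set of vertices no two of which are joined by a directed path. $N$ satisfies the antichain-to-leaf property if for every antichain of $k$ vertices there exist $k$ vertex-disjoint directed paths from the elements of the antichain to leaves of $N$. *)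

(* Defs.v *)
From Stdlib Require Import Reals.
From mathcomp Require Import all_boot.
Set Implicit Arguments. Unset Strict Implicit. Unset Printing Implicit Defensive.

(* A directed graph without parallel arcs: a finite vertex type V and an arc
   relation E (E u v  <=>  (u,v) is an arc). *)
Section Net.
Variables (V : finType) (E : rel V).

Definition indeg (v : V) : nat := #|[set u | E u v]|.
Definition outdeg (v : V) : nat := #|[set w | E v w]|.

Definition is_leaf (v : V) : bool := outdeg v == 0.

Definition acyclic : Prop := forall u v, E u v -> ~~ connect E v u.

Definition phylo_network (r : V) : Prop :=
  acyclic /\
  ( (* the trivial network consisting of a single leaf *)
    (#|V| = 1 /\ forall u v, ~~ E u v)
  \/
    (indeg r = 0 /\ 1 <= outdeg r /\
     forall v, v != r ->
       1 <= indeg v /\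
          ((indeg v = 1 /\ outdeg v = 0)
           \/ (indeg v = 1 /\ 2 <= outdeg v)
           \/ (2 <= indeg v /\ outdeg v = 1))) ).

Definition reticulation (v : V) : bool := 2 <= indeg v.

Definition temporal : Prop :=
  exists lam : V -> R,
    forall u v, E u v ->
      (reticulation v -> lam u = lam v) /\ (~~ reticulation v -> Rlt (lam u) (lam v)).

(* tree-based: a rooted spanning tree (arc subset F) with root r all of whose
   leaves are leaves of N *)
Definition tree_based (r : V) : Prop :=
  exists F : rel V,
    [/\ subrel F E,
        forall v, v != r -> #|[set u | F u v]| = 1,
        forall v, connect F r v
      & forall v, [set w | F v w] == set0 -> is_leaf v].

Definition antichain (A : {set V}) : Prop :=
  forall u v, u \in A -> v \in A -> u != v -> ~~ connect E u v.

Definition antichain_to_leaf : Prop :=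
  forall A : {set V}, antichain A ->
    exists p : V -> seq V,
      (forall a, a \in A -> path E a (p a) /\ is_leaf (last a (p a))) /\
      (forall a b, a \in A -> b \in A -> a != b ->
         forall x, x \in a :: p a -> x \notin b :: p b).
End Net.

(* Main.v *)
Require Import Defs.
From Stdlib Require Import Reals Lra.
From mathcomp Require Import all_boot zify.
Set Implicit Arguments. Unset Strict Implicit. Unset Printing Implicit Defensive.

Section Hall.
Variable T : finType.

Definition Nb (G : rel T) (S : {set T}) : {set T} := [set w | [exists u in S, G u w]].

Lemma NbP (G : rel T) (S : {set T}) w : reflect (exists2 u, u \in S & G u w) (w \in Nb G S).
Proof.
rewrite inE; apply: (iffP existsP) => [[u /andP[]]|[u Hu Hg]]; first by exists u.
by exists u; rewrite Hu.
Qed.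

Lemma NbU (G : rel T) (A B : {set T}) : Nb G (A :|: B) = Nb G A :|: Nb G B.
Proof.
apply/setP => w; rewrite in_setU; apply/NbP/orP.
  by move=> [u]; rewrite inE => /orP[] Hu Hg; [left|right]; apply/NbP; exists u.
by case=> /NbP[u Hu Hg]; exists u; rewrite // inE Hu ?orbT.
Qed.

Lemma hall_n n : forall (G : rel T) (X : {set T}), #|X| <= n ->
  (forall S : {set T}, S \subset X -> #|S| <= #|Nb G S|) ->
  exists m : T -> T, (forall u, u \in X -> G u (m u)) /\ {in X &, injective m}.
Proof.
elim: n => [|n IH] G X HX Hc.
  move: HX; rewrite leqn0 cards_eq0 => /eqP ->.
  by exists id; split => [u|u v]; rewrite inE.
case: (boolP [exists S : {set T}, [&& S \proper X, S != set0 & #|Nb G S| <= #|S|]]).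
- move=> /existsP[S0 /and3P[HS0 HS0n HS0c]].
  have sS0X : S0 \subset X by apply: proper_sub.
  have [m1 [Hm1 Im1]] : exists m : T -> T, (forall u, u \in S0 -> G u (m u)) /\ {in S0 &, injective m}.
    apply: (IH G S0).
      by rewrite -ltnS; apply: leq_trans HX; apply: proper_card.
    by move=> S HS; apply: Hc; apply: subset_trans sS0X.
  pose G2 := fun u w => G u w && (w \notin Nb G S0).
  have [m2 [Hm2 Im2]] : exists m : T -> T, (forall u, u \in X :\: S0 -> G2 u (m u)) /\ {in X :\: S0 &, injective m}.
    apply: (IH G2 (X :\: S0)).
      rewrite cardsDS // -ltnS; apply: leq_trans HX.
      have := proper_card HS0; have : 0 < #|S0| by rewrite card_gt0.
      lia.
    move=> S HS.
    have HSd : [disjoint S & S0].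
      rewrite -setI_eq0; apply/eqP/setP => x; rewrite !inE.
      apply/negbTE/negP => /andP[xS xS0]; move/subsetP: HS => /(_ x xS).
      by rewrite inE xS0.
    have := Hc (S :|: S0); rewrite subUset sS0X andbT.
    have -> : S \subset X by apply: subset_trans HS (subsetDl _ _).
    move=> /(_ isT); rewrite cardsU (disjoint_setI0 HSd) cards0 subn0 NbU.
    have -> : Nb G S :|: Nb G S0 = Nb G2 S :|: Nb G S0.
      apply/setP => w; rewrite !in_setU; case: (boolP (w \in Nb G S0)); rewrite ?orbT // !orbF => Hw.
      apply/idP/idP => /NbP[u Hu Hg]; apply/NbP; exists u => //.
        by rewrite /G2 Hg.
      by move: Hg => /andP[].
    have [H' _] := leq_card_setU (Nb G2 S) (Nb G S0).
    move: HS0c H'; lia.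
  exists (fun u => if u \in S0 then m1 u else m2 u); split.
    move=> u Hu; case: ifP => HuS; first by apply: Hm1.
    have : u \in X :\: S0 by rewrite inE HuS Hu.
    by move/Hm2 => /andP[].
  move=> u v Hu Hv /=.
  case: ifP => HuS; case: ifP => HvS.
  + by apply: Im1.
  + move=> Heq; have : m2 v \in Nb G S0 by rewrite -Heq; apply/NbP; exists u => //; apply: Hm1.
    have : v \in X :\: S0 by rewrite inE HvS Hv.
    by move/Hm2 => /andP[_ /negbTE ->].
  + move=> Heq; have : m2 u \in Nb G S0 by rewrite Heq; apply/NbP; exists v => //; apply: Hm1.
    have : u \in X :\: S0 by rewrite inE HuS Hu.
    by move/Hm2 => /andP[_ /negbTE ->].
  + by apply: Im2; rewrite inE ?HuS ?HvS.
- rewrite negb_exists => /forallP Hnt.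
  case: (set_0Vmem X) => [->|[x Hx]].
    by exists id; split => [u|u v]; rewrite inE.
  have : 1 <= #|Nb G [set x]|.
    by have := Hc [set x]; rewrite sub1set Hx cards1 => /(_ isT).
  rewrite card_gt0 => /set0Pn[y /NbP[x' ]]; rewrite inE => /eqP -> Hxy.
  pose G' := fun u w => G u w && (w != y).
  have [m' [Hm' Im']] : exists m : T -> T, (forall u, u \in X :\ x -> G' u (m u)) /\ {in X :\ x &, injective m}.
    apply: (IH G' (X :\ x)).
      by rewrite -ltnS; apply: leq_trans HX; rewrite (cardsD1 x X) Hx.
    move=> S HS.
    case: (set_0Vmem S) => [->|[z Hz]]; first by rewrite cards0.
    have HSX : S \proper X.
      rewrite properE; apply/andP; split; first by apply: subset_trans HS (subsetDl _ _).
      apply/subsetPn; exists x => //; apply/negP => xS.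
      by move/subsetP: HS => /(_ x xS); rewrite !inE eqxx.
    have := Hnt S; rewrite HSX /= negb_and -ltnNge.
    have -> : (S != set0) by apply/set0Pn; exists z.
    move=> /= Hlt.
    have Hsub : Nb G S :\ y \subset Nb G' S.
      apply/subsetP => w; rewrite in_setD1 => /andP[wy /NbP[u Hu Hg]].
      by apply/NbP; exists u => //; rewrite /G' Hg wy.
    have := subset_leq_card Hsub; move: Hlt; rewrite (cardsD1 y (Nb G S)).
    case: (y \in Nb G S) => /=; lia.
  exists (fun u => if u == x then y else m' u); split.
    move=> u Hu; case: eqP => [->//|/eqP Hux].
    have : u \in X :\ x by rewrite !inE Hux Hu.
    by move/Hm' => /andP[].
  move=> u v Hu Hv /=.
  case: eqP => [->|/eqP Hux]; case: eqP => [->//|/eqP Hvx].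
  + move=> Heq; have : v \in X :\ x by rewrite !inE Hvx Hv.
    by move/Hm' => /andP[_]; rewrite -Heq eqxx.
  + move=> Heq; have : u \in X :\ x by rewrite !inE Hux Hu.
    by move/Hm' => /andP[_]; rewrite Heq eqxx.
  + by apply: Im'; rewrite !inE ?Hux ?Hvx.
Qed.

Lemma hall (G : rel T) (X : {set T}) :
  (forall S : {set T}, S \subset X -> #|S| <= #|Nb G S|) ->
  exists m : T -> T, (forall u, u \in X -> G u (m u)) /\ {in X &, injective m}.
Proof. by apply: hall_n. Qed.
End Hall.


Section Basics.
Variable V : finType.
Variable E : rel V.
Variable r : V.

Lemma phylo_facts : phylo_network E r ->
  [/\ acyclic E, (forall u w, E u w -> w != r),
      (forall v, v != r -> exists u, E u v) &
      (forall v w1 w2, reticulation E v -> E v w1 -> E v w2 -> w1 = w2)].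
Proof.
move=> [Hac [[Hc Hn]|[Hr [Ho Hv]]]]; split => //.
- by move=> u w; rewrite (negbTE (Hn u w)).
- move=> v Hv; exfalso; move: Hv => /eqP; apply.
  have /card_le1_eqP H : #|[pred x : V | true]| <= 1.
    by rewrite -Hc; apply: subset_leq_card; apply/subsetP.
  by apply: H.
- move=> v w1 w2; rewrite /reticulation /indeg.
  have -> : [set u | E u v] = set0 by apply/setP => x; rewrite !inE (negbTE (Hn _ _)).
  by rewrite cards0.
- move=> u w Huw; apply/eqP => Hw; subst w.
  move: Hr; rewrite /indeg => /eqP; rewrite cards_eq0 => /eqP /setP /(_ u).
  by rewrite !inE Huw.
- move=> v Hvr; have [H1 _] := Hv v Hvr.
  move: H1; rewrite /indeg card_gt0 => /set0Pn[u]; rewrite inE => Hu.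
  by exists u.
- move=> v w1 w2 Hret H1 H2.
  have Ho1 : outdeg E v = 1.
    case: (eqVneq v r) => [Hvr|Hvr].
      by subst v; move: Hret; rewrite /reticulation Hr.
    have [_ [[Hi _]|[[Hi _]|[_ Ho']]]] := Hv v Hvr => //;
      by move: Hret; rewrite /reticulation Hi.
  have /card_le1_eqP H : #|[set w | E v w]| <= 1 by move: Ho1; rewrite /outdeg => ->.
  by apply: H; rewrite inE.
Qed.
End Basics.


Section Graph.
Variable V : finType.
Variable E : rel V.
Hypothesis Hac : acyclic E.

Lemma connect_last x v : connect E x v -> x != v -> exists2 y, connect E x y & E y v.
Proof.
move=> /connectP[p Hp ->]; elim/last_ind: p Hp => [|q y _] /=; first by rewrite eqxx.
rewrite rcons_path last_rcons => /andP[Hq Hy] _.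
by exists (last x q) => //; apply/connectP; exists q.
Qed.

Lemma connect_first x v : connect E x v -> x != v -> exists2 y, E x y & connect E y v.
Proof.
move=> /connectP[[|y p] /= Hp ->]; first by rewrite eqxx.
by move: Hp => /andP[Hy Hp] _; exists y => //; apply/connectP; exists p.
Qed.

Definition anc (v : V) := #|[set x | connect E x v]|.
Definition desc (v : V) := #|[set x | connect E v x]|.

Lemma anc_lt u w : E u w -> anc u < anc w.
Proof.
move=> Huw; apply: proper_card; apply/properP; split.
  by apply/subsetP => x; rewrite !inE => H; apply: connect_trans H (connect1 Huw).
by exists w; rewrite !inE ?connect0 //; apply: Hac.
Qed.

Lemma desc_lt u w : E u w -> desc w < desc u.
Proof.
move=> Huw; apply: proper_card; apply/properP; split.
  by apply/subsetP => x; rewrite !inE => H; apply: connect_trans (connect1 Huw) H.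
by exists u; rewrite !inE ?connect0 //; apply: Hac.
Qed.

Lemma path_follow a p u : path E a p -> is_leaf E (last a p) -> u \in a :: p ->
  ~~ is_leaf E u -> exists2 w, E u w & w \in p.
Proof.
elim: p a => [|b p IH] a /=.
  by move=> _ Hl; rewrite inE => /eqP ->; rewrite Hl.
move=> /andP[Hab Hp] Hl; rewrite inE => /orP[/eqP ->|Hu] Hnl.
  by exists b; rewrite ?inE ?eqxx.
have [w Hw Hwp] := IH b Hp Hl Hu Hnl.
by exists w => //; rewrite inE Hwp orbT.
Qed.

Lemma functional_comparable (C : rel V) :
  (forall u w1 w2, C u w1 -> C u w2 -> w1 = w2) ->
  forall h x y, connect C h x -> connect C h y -> connect C x y || connect C y x.
Proof.
move=> Hf h x y /connectP[p Hp ->] Hy; elim: p h Hp Hy => [|z p IH] h /=.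
  by move=> _ ->.
move=> /andP[Hz Hp] Hy.
case: (eqVneq h y) => [<-|Hhy].
  apply/orP; right; apply/connectP; exists (z :: p) => //=; by rewrite Hz.
move: Hy => /connectP[[|z' q] /= Hq Hyq]; first by rewrite Hyq eqxx in Hhy.
move: Hq => /andP[Hz' Hq]; have Ezz := Hf _ _ _ Hz Hz'; subst z'.
by apply: IH => //; apply/connectP; exists q.
Qed.

Section Walk.
Variable s : V -> V.
Hypothesis Hs : forall u, ~~ is_leaf E u -> E u (s u).
Hypothesis Hinj : {in [pred u | ~~ is_leaf E u] &, injective s}.

Fixpoint walk n u := if n is n'.+1 then (if is_leaf E u then [::] else s u :: walk n' (s u)) else [::].

Lemma walk_path n u : path E u (walk n u).
Proof.
elim: n u => [|n IH] u //=; case: ifP => //= Hl.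
by rewrite Hs ?Hl // IH.
Qed.

Lemma walk_leaf n u : desc u <= n -> is_leaf E (last u (walk n u)).
Proof.
elim: n u => [|n IH] u /=.
  by rewrite leqn0 /desc cards_eq0 => /eqP /setP /(_ u); rewrite !inE connect0.
case: ifP => //= Hl Hd; apply: IH.
by have := desc_lt (Hs (negbT Hl)); lia.
Qed.

Lemma walk_mem n u x : x \in u :: walk n u ->
  exists k, x = iter k s u /\ forall j, j < k -> ~~ is_leaf E (iter j s u).
Proof.
elim: n u => [|n IH] u /=.
  by rewrite inE => /eqP ->; exists 0.
case: ifP => Hl; first by rewrite inE => /eqP ->; exists 0.
rewrite inE => /orP[/eqP ->|]; first by exists 0.
move=> /IH[k [-> Hk]]; exists k.+1; split; first by rewrite iterSr.
case=> [|j]; first by rewrite /= Hl.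
by rewrite ltnS => /Hk; rewrite iterSr.
Qed.

Lemma iter_connect k u : (forall j, j < k -> ~~ is_leaf E (iter j s u)) -> connect E u (iter k s u).
Proof.
elim: k => [|k IH] H /=; first by rewrite connect0.
apply: connect_trans (IH _) (connect1 (Hs (H k _))) => // j Hj.
by apply: H; apply: ltnW.
Qed.

Lemma iter_meet i j a b : iter i s a = iter j s b ->
  (forall k, k < i -> ~~ is_leaf E (iter k s a)) ->
  (forall k, k < j -> ~~ is_leaf E (iter k s b)) ->
  (exists k, a = iter k s b /\ forall l, l < k -> ~~ is_leaf E (iter l s b)) \/
  (exists k, b = iter k s a /\ forall l, l < k -> ~~ is_leaf E (iter l s a)).
Proof.
elim: i j => [|i IH] j.
  by move=> /= -> _ Hb; left; exists j.
case: j => [|j].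
  by move=> /= <- Ha _; right; exists i.+1.
move=> /= Heq Ha Hb; apply: IH.
- apply: Hinj Heq; rewrite inE; [exact: Ha | exact: Hb].
- by move=> k Hk; apply: Ha; apply: ltnW.
- by move=> k Hk; apply: Hb; apply: ltnW.
Qed.

Lemma atl_of_s : antichain_to_leaf E.
Proof.
move=> A HA; exists (walk #|V|); split.
  move=> a _; split; first by apply: walk_path.
  by apply: walk_leaf; apply: max_card.
move=> a b Ha Hb Hab x /walk_mem[i [-> Hi]]; apply/negP => /walk_mem[j [Hj Hj']].
have [[k [Hk Hk']]|[k [Hk Hk']]] := iter_meet Hj Hi Hj'.
- have := HA b a Hb Ha; rewrite eq_sym Hab => /(_ isT); rewrite Hk.
  by rewrite iter_connect.
- have := HA a b Ha Hb Hab; rewrite Hk.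
  by rewrite iter_connect.
Qed.
End Walk.
End Graph.


Section TB.
Variable V : finType.
Variable E : rel V.
Variable r : V.
Hypothesis Hac : acyclic E.
Hypothesis Hnr : forall u w, E u w -> w != r.
Hypothesis Hpar : forall v, v != r -> exists u, E u v.

Lemma s_of_tb : tree_based E r -> exists s : V -> V,
  (forall u, ~~ is_leaf E u -> E u (s u)) /\ {in [pred u | ~~ is_leaf E u] &, injective s}.
Proof.
move=> [F [HFE HF1 _ Hleaf]].
pose s u := odflt u [pick w | F u w].
have HsF : forall u, ~~ is_leaf E u -> F u (s u).
  move=> u Hu; rewrite /s; case: pickP => [w Hw //|Hn] /=.
  by move: Hu; rewrite Hleaf //; apply/eqP/setP => w; rewrite !inE Hn.
exists s; split; first by move=> u Hu; apply: HFE; apply: HsF.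
move=> u v; rewrite !inE => Hu Hv Heq.
have Hw : s v != r by apply: (@Hnr v); apply: HFE; apply: HsF.
have /card_le1_eqP H : #|[set x | F x (s v)]| <= 1 by rewrite HF1.
by apply: H; rewrite inE ?HsF // -Heq HsF.
Qed.

Lemma tb_of_s (s : V -> V) : (forall u, ~~ is_leaf E u -> E u (s u)) ->
  {in [pred u | ~~ is_leaf E u] &, injective s} -> tree_based E r.
Proof.
move=> Hs Hinj.
pose par v := odflt v [pick u | E u v].
have Hparv : forall v, v != r -> E (par v) v.
  move=> v Hv; rewrite /par; case: pickP => [u Hu //|Hn] /=.
  by have [u Hu] := Hpar Hv; rewrite Hn in Hu.
pose start v := ~~ [exists u, ~~ is_leaf E u && (s u == v)].
pose F u v := (v != r) && (if start v then u == par v else ~~ is_leaf E u && (s u == v)).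
have HFE : subrel F E.
  move=> u v /andP[Hv]; case: ifP => _; first by move/eqP ->; apply: Hparv.
  by move=> /andP[Hnl /eqP <-]; apply: Hs.
have HF1 : forall v, v != r -> #|[set u | F u v]| = 1.
  move=> v Hv; case Hst: (start v).
    suff -> : [set u | F u v] = [set par v] by rewrite cards1.
    by apply/setP => x; rewrite !inE /F Hv Hst.
  move: (Hst); rewrite /start negbK => /existsP[u0 /andP[Hu0 /eqP Hsu0]].
  suff -> : [set u | F u v] = [set u0] by rewrite cards1.
  apply/setP => x; rewrite !inE /F Hv Hst /=.
  apply/idP/idP => [/andP[Hx /eqP Hsx]|/eqP ->]; last by rewrite Hu0 Hsu0 eqxx.
  by apply/eqP; apply: Hinj; rewrite ?inE // Hsx.
exists F; split => //.
- move=> v; move: {2}(anc E v) (leqnn (anc E v)) => n; elim: n v => [|n IH] v Hn.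
    by move: Hn; rewrite leqn0 /anc cards_eq0 => /eqP /setP /(_ v); rewrite !inE connect0.
  case: (eqVneq v r) => [->|Hvr]; first by apply: connect0.
  have : 0 < #|[set u | F u v]| by rewrite HF1.
  rewrite card_gt0 => /set0Pn[u]; rewrite inE => Hu.
  apply: connect_trans (IH u _) (connect1 Hu).
  by have := anc_lt Hac (HFE _ _ Hu); lia.
- move=> v /eqP Hset; case: (boolP (is_leaf E v)) => // Hv; exfalso.
  move: Hset => /setP /(_ (s v)); rewrite !inE /F (Hnr (Hs v Hv)) /=.
  have -> : start (s v) = false.
    by apply/negbF/existsP; exists v; rewrite Hv eqxx.
  by rewrite Hv eqxx.
Qed.
End TB.


Definition eqR (a b : R) : bool := if Req_dec_T a b then true else false.
Lemma eqRP a b : reflect (a = b) (eqR a b).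
Proof. by rewrite /eqR; case: Req_dec_T => H; constructor. Qed.

Section Hard.
Variable V : finType.
Variable E : rel V.
Hypothesis Hac : acyclic E.
Hypothesis Hret1 : forall v w1 w2, reticulation E v -> E v w1 -> E v w2 -> w1 = w2.
Hypothesis Hatl : antichain_to_leaf E.
Variable lam : V -> R.
Hypothesis Hlam : forall u v, E u v ->
      (reticulation E v -> lam u = lam v) /\ (~~ reticulation E v -> Rlt (lam u) (lam v)).

Local Notation ret := (reticulation E).

Lemma lam_le u v : E u v -> Rle (lam u) (lam v).
Proof.
move=> H; have [H1 H2] := Hlam H; case: (boolP (ret v)) => Hv.
  by rewrite H1 //; apply: Rle_refl.
by apply: Rlt_le; apply: H2.
Qed.

Lemma connect_le u v : connect E u v -> Rle (lam u) (lam v).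
Proof.
move=> /connectP[p Hp ->]; elim: p u Hp => [|w p IH] u /=; first by move=> _; apply: Rle_refl.
by move=> /andP[Huw Hp]; apply: Rle_trans (lam_le Huw) (IH _ Hp).
Qed.

Lemma connect_lt u v : connect E u v -> u != v -> ~~ ret v -> Rlt (lam u) (lam v).
Proof.
move=> Hc Huv Hv; have [y Huy Hyv] := connect_last Hc Huv.
by apply: Rle_lt_trans (connect_le Huy) _; apply: (Hlam Hyv).2.
Qed.

Lemma nonleafP v : reflect (exists w, E v w) (~~ is_leaf E v).
Proof.
rewrite /is_leaf /outdeg cards_eq0; apply: (iffP (set0Pn _)) => [[w]|[w Hw]].
  by rewrite inE => Hw; exists w.
by exists w; rewrite inE.
Qed.

Lemma atl_first a p : path E a p -> is_leaf E (last a p) -> ~~ is_leaf E a ->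
  exists w q, p = w :: q /\ E a w.
Proof.
case: p => [|w q] /=; first by move=> _ ->.
by move=> /andP[Haw _] _ _; exists w, q.
Qed.

Lemma ret_no_reach y1 y2 c : ret y1 -> E y1 c -> E y2 c -> y1 != y2 -> ~~ connect E y1 y2.
Proof.
move=> Hy1 H1 H2 Hne; apply/negP => Hc.
have [z Hz Hzc] := connect_first Hc Hne.
have Ezc := Hret1 Hy1 Hz H1; subst z.
by move: (Hac H2); rewrite Hzc.
Qed.

Lemma ret_parent_unique y1 y2 c : ret y1 -> ret y2 -> E y1 c -> E y2 c -> y1 = y2.
Proof.
move=> Hy1 Hy2 H1 H2; apply/eqP/negP => /negP Hne.
have HA : antichain E [set y1; y2].
  move=> u v; rewrite !inE => /orP[]/eqP -> /orP[]/eqP -> //; rewrite ?eqxx //.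
    by move=> _; apply: (ret_no_reach Hy1 H1 H2).
  by move=> _; apply: (ret_no_reach Hy2 H2 H1); rewrite eq_sym.
have [p [Hp Hd]] := Hatl HA.
have Hy1A : y1 \in [set y1; y2] by rewrite !inE eqxx.
have Hy2A : y2 \in [set y1; y2] by rewrite !inE eqxx orbT.
have [Hp1 Hl1] := Hp _ Hy1A; have [Hp2 Hl2] := Hp _ Hy2A.
have Hn1 : ~~ is_leaf E y1 by apply/nonleafP; exists c.
have Hn2 : ~~ is_leaf E y2 by apply/nonleafP; exists c.
have [w1 [q1 [E1 Hw1]]] := atl_first Hp1 Hl1 Hn1.
have [w2 [q2 [E2 Hw2]]] := atl_first Hp2 Hl2 Hn2.
have := Hd _ _ Hy1A Hy2A Hne c.
rewrite E1 E2 -(Hret1 Hy1 Hw1 H1) !inE eqxx orbT /= => /(_ isT).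
by rewrite (Hret1 Hy2 Hw2 H2) (Hret1 Hy1 Hw1 H1) eqxx orbT.
Qed.

Definition B := [set u | [&& ~~ ret u, ~~ is_leaf E u & [forall w, E u w ==> ret w]]].
Definition G u w := E u w && ~~ [exists y, ret y && E y w].
Definition rhead h := ret h && ~~ [exists y, ret y && E y h].
Definition C u w := [&& E u w, ret u & ret w].

Lemma C_func u w1 w2 : C u w1 -> C u w2 -> w1 = w2.
Proof. by move=> /and3P[H1 Hu _] /and3P[H2 _ _]; apply: Hret1 Hu H1 H2. Qed.

Lemma head_exists w : ret w -> exists2 h, rhead h & connect C h w.
Proof.
move: {2}(anc E w) (leqnn (anc E w)) => n; elim: n w => [|n IH] w Hn Hw.
  by move: Hn; rewrite leqn0 /anc cards_eq0 => /eqP /setP /(_ w); rewrite !inE connect0.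
case: (boolP [exists y, ret y && E y w]) => [/existsP[y /andP[Hy Hyw]]|Hno].
  have [h Hh Hc] := IH y (leq_trans (anc_lt Hac Hyw) Hn) Hy.
  exists h => //; apply: connect_trans Hc (connect1 _).
  by rewrite /C Hyw Hy Hw.
by exists w; rewrite ?connect0 // /rhead Hw Hno.
Qed.

Lemma C_lam h w : connect C h w -> lam h = lam w.
Proof.
move=> /connectP[q Hq ->]; elim: q h Hq => [|z q IH] h //=.
move=> /andP[/and3P[Hhz _ Hz] Hq]; rewrite -(IH _ Hq).
by apply: (Hlam Hhz).1.
Qed.

Lemma path_follow_C a p u l : path E a p -> is_leaf E (last a p) -> u \in a :: p ->
  connect C u l -> l \in a :: p.
Proof.
move=> Hp Hl Hu /connectP[q Hq ->]; elim: q u Hu Hq => [|z q IH] u Hu //=.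
move=> /andP[/and3P[Huz Hur Hz] Hq]; apply: IH Hq.
have Hnl : ~~ is_leaf E u by apply/nonleafP; exists z.
have [w Hw Hwp] := path_follow Hp Hl Hu Hnl.
by rewrite -(Hret1 Hur Hw Huz) inE Hwp orbT.
Qed.

Lemma head_reach u h : lam u = lam h -> rhead h -> connect E u h -> u != h ->
  E u h /\ ~~ ret u.
Proof.
move=> Heq /andP[Hh Hno] Hc Hne.
have [y Huy Hyh] := connect_last Hc Hne.
case: (boolP (ret y)) => Hy.
  by move/negP: Hno; case; apply/existsP; exists y; rewrite Hy Hyh.
case: (eqVneq u y) => [Euy|Huy']; first by subst y; split.
have := connect_lt Huy Huy' Hy; have := lam_le Hyh; rewrite Heq => H1 H2.
by exfalso; lra.
Qed.

Lemma B_ret_child u w : u \in B -> E u w -> ret w.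
Proof. by rewrite inE => /and3P[_ _ /forallP /(_ w) /implyP]. Qed.

Lemma hall_time (S : {set V}) t : S \subset B -> (forall x, x \in S -> lam x = t) ->
  #|S| <= #|Nb G S|.
Proof.
move=> HSB HSt.
pose Q := [set h | [&& rhead h, eqR (lam h) t & ~~ [exists x in S, E x h]]].
pose A := S :|: Q.
have HSnr : forall x, x \in S -> ~~ ret x.
  by move=> x /(subsetP HSB); rewrite inE => /and3P[].
have HQr : forall x, x \in Q -> rhead x /\ lam x = t /\ ~~ [exists y in S, E y x].
  by move=> x; rewrite inE => /and3P[H1 /eqRP H2 H3].
have HSQ : forall x, x \in S -> x \notin Q.
  move=> x Hx; apply/negP => /HQr[/andP[Hr _] _].
  by move: (HSnr x Hx); rewrite Hr.
have HAt : forall a, a \in A -> lam a = t.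
  by move=> a; rewrite in_setU => /orP[/HSt|/HQr[_ []]].
have HA : antichain E A.
  move=> u v Hu Hv Huv; apply/negP => Hc.
  move: (Hv); rewrite in_setU => /orP[] Hv'.
    have := connect_lt Hc Huv (HSnr _ Hv'); rewrite (HAt u Hu) (HAt v Hv).
    by apply: Rlt_irrefl.
  have [Hh [_ Hnot]] := HQr _ Hv'.
  have [Huh Hnu] := head_reach (etrans (HAt u Hu) (esym (HAt v Hv))) Hh Hc Huv.
  move: Hu; rewrite in_setU => /orP[] Hu.
    by move/negP: Hnot; apply; apply/existsP; exists u; rewrite Hu Huh.
  by have [/andP[Hr _] _] := HQr _ Hu; rewrite Hr in Hnu.
have [p [Hp Hd]] := Hatl HA.
pose e a := if a \in S then head a (p a) else a.
have He : forall a, a \in A -> [/\ ret (e a), e a \in a :: p a & lam (e a) = t].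
  move=> a Ha; rewrite /e; case: ifP => HaS.
    have HaB := subsetP HSB _ HaS.
    have [Hp1 Hl1] := Hp a Ha.
    have Hnl : ~~ is_leaf E a by move: HaB; rewrite inE => /and3P[].
    have [w [q [Epq Haw]]] := atl_first Hp1 Hl1 Hnl.
    rewrite Epq /=; have Hw := B_ret_child HaB Haw.
    split => //; first by rewrite !inE eqxx orbT.
    by rewrite -(Hlam Haw).1 // HSt.
  move: Ha; rewrite in_setU HaS /= => /HQr[/andP[Hr _] [Ht _]].
  by split; rewrite ?inE ?eqxx.
pose f a := if a \in Q then a else odflt a [pick h | rhead h && connect C h (e a)].
have Hf : forall a, a \in A -> rhead (f a) /\ connect C (f a) (e a).
  move=> a Ha; rewrite /f; case: ifP => HaQ.
    have [Hh _] := HQr _ HaQ; split => //.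
    have HaS : a \notin S by apply/negP => /HSQ; rewrite HaQ.
    by rewrite /e (negbTE HaS) connect0.
  case: pickP => [h /andP[]//|Hn] /=.
  have [Hr _ _] := He a Ha; have [h Hh Hc] := head_exists Hr.
  by move: (Hn h); rewrite Hh Hc.
have HfQ : forall a, a \in A -> f a \in Q :|: Nb G S.
  move=> a Ha; case: (boolP (a \in Q)) => HaQ.
    by rewrite /f HaQ in_setU HaQ.
  have [Hh Hc] := Hf a Ha; have [_ _ Het] := He a Ha.
  rewrite in_setU; case: (boolP [exists x in S, E x (f a)]) => [/existsP[x /andP[Hx Hxf]]|Hno].
    apply/orP; right; apply/NbP; exists x => //.
    by move: Hh; rewrite /G /rhead Hxf => /andP[].
  apply/orP; left; rewrite inE Hh Hno andbT /=; apply/eqRP.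
  by rewrite (C_lam Hc).
have Hfi : {in A &, injective f}.
  move=> a b Ha Hb Hab; apply/eqP/negP => /negP Hne.
  have [_ Hca] := Hf a Ha; have [_ Hcb] := Hf b Hb.
  rewrite Hab in Hca.
  have [_ Hea _] := He a Ha; have [_ Heb _] := He b Hb.
  have [Hpa Hla] := Hp a Ha; have [Hpb Hlb] := Hp b Hb.
  case/orP: (functional_comparable C_func Hca Hcb) => Hc.
    have := Hd a b Ha Hb Hne (e b) (path_follow_C Hpa Hla Hea Hc).
    by rewrite Heb.
  have Hba : b != a by rewrite eq_sym.
  have := Hd b a Hb Ha Hba (e a) (path_follow_C Hpb Hlb Heb Hc).
  by rewrite Hea.
have HcA : #|A| = #|S| + #|Q|.
  rewrite cardsU; suff -> : S :&: Q = set0 by rewrite cards0 subn0.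
  apply/setP => x; rewrite !inE; apply/negbTE/negP => /andP[Hx Hq].
  by move: (HSQ x Hx); rewrite inE Hq.
have Hsub : f @: A \subset Q :|: Nb G S.
  by apply/subsetP => y /imsetP[a Ha ->]; apply: HfQ.
have := subset_leq_card Hsub; rewrite card_in_imset //.
have [H' _] := leq_card_setU Q (Nb G S).
lia.
Qed.

Lemma B_G_lam u w : u \in B -> G u w -> lam u = lam w.
Proof. by move=> HuB /andP[Huw _]; apply: (Hlam Huw).1; apply: B_ret_child HuB Huw. Qed.

Lemma hall_all n (S : {set V}) : #|S| <= n -> S \subset B -> #|S| <= #|Nb G S|.
Proof.
elim: n S => [|n IH] S Hn HSB; first by move: Hn; rewrite leqn0 => /eqP ->.
case: (set_0Vmem S) => [->|[x0 Hx0]]; first by rewrite cards0.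
pose P := [set x | eqR (lam x) (lam x0)].
have H1 : #|S :&: P| <= #|Nb G (S :&: P)|.
  apply: (@hall_time _ (lam x0)).
    by apply: subset_trans HSB; apply: subsetIl.
  by move=> x; rewrite !inE => /andP[_ /eqRP].
have Hlt : 0 < #|S :&: P| by rewrite card_gt0; apply/set0Pn; exists x0; rewrite !inE Hx0 /=; apply/eqRP.
have HID := cardsID P S.
have H2 : #|S :\: P| <= #|Nb G (S :\: P)|.
  apply: IH; first by lia.
  by apply: subset_trans HSB; apply: subsetDl.
have HN : Nb G S = Nb G (S :&: P) :|: Nb G (S :\: P) by rewrite -NbU setID.
have Hdis : Nb G (S :&: P) :&: Nb G (S :\: P) = set0.
  apply/setP => w; rewrite in_setI in_set0; apply/negbTE/negP => /andP[/NbP[x Hx Hxw] /NbP[y Hy Hyw]].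
  move: Hx Hy; rewrite !inE => /andP[HxS /eqRP Hx] /andP[/negP Hy HyS]; apply: Hy; apply/eqRP.
  rewrite (B_G_lam (subsetP HSB _ HyS) Hyw) -Hx (B_G_lam (subsetP HSB _ HxS) Hxw) //.
rewrite HN cardsU Hdis cards0 subn0; lia.
Qed.

Lemma s_exists : exists s : V -> V,
  (forall u, ~~ is_leaf E u -> E u (s u)) /\ {in [pred u | ~~ is_leaf E u] &, injective s}.
Proof.
have [m [Hm Im]] := hall (G := G) (X := B) (fun S HS => hall_all (leqnn _) HS).
pose s u := if ret u then odflt u [pick w | E u w]
  else if [exists w, E u w && ~~ ret w] then odflt u [pick w | E u w && ~~ ret w] else m u.
have Hs : forall u, ~~ is_leaf E u -> E u (s u).
  move=> u Hu; rewrite /s; case: ifP => Hr.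
    case: pickP => [w //|Hn] /=; by have [w Hw] := nonleafP _ Hu; rewrite Hn in Hw.
  case: ifP => [/existsP[w Hw]|Hno].
    by case: pickP => [w' /andP[]//|Hn] /=; rewrite Hn in Hw.
  have HuB : u \in B.
    rewrite inE Hr Hu /=; apply/forallP => w; apply/implyP => Hw.
    by apply/negPn/negP => Hnr; move/negbT: Hno => /existsPn /(_ w); rewrite Hw Hnr.
  by have /andP[] := Hm u HuB.
have Hcl : forall u, ~~ is_leaf E u -> ret (s u) -> ret u \/ (u \in B /\ G u (s u)).
  move=> u Hu Hsu; case: (boolP (ret u)) => Hr; [by left | right].
  move: Hsu; rewrite /s (negbTE Hr); case: ifP => [/existsP[w Hw]|Hno].
    by case: pickP => [w' /andP[_ /negbTE ->]//|Hn] /=; rewrite Hn in Hw.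
  have HuB : u \in B.
    rewrite inE Hr Hu /=; apply/forallP => w; apply/implyP => Hw.
    by apply/negPn/negP => Hnr; move/negbT: Hno => /existsPn /(_ w); rewrite Hw Hnr.
  by move=> _; split => //; apply: Hm.
exists s; split => // u v; rewrite !inE => Hu Hv Heq.
have Huc := Hs u Hu; have Hvc := Hs v Hv; rewrite Heq in Huc.
case: (boolP (ret (s v))) => Hc; last first.
  have /card_le1_eqP H : #|[set x | E x (s v)]| <= 1.
    by move: Hc; rewrite /reticulation /indeg -ltnNge ltnS.
  by apply: H; rewrite inE.
have Hcu := Hc; rewrite -Heq in Hcu.
case: (Hcl u Hu Hcu) => [Hru|[HuB HuG]]; case: (Hcl v Hv Hc) => [Hrv|[HvB HvG]].
- by apply: ret_parent_unique Hru Hrv Huc Hvc.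
- by move: HvG => /andP[_ /existsP]; case; exists u; rewrite Hru Huc.
- by move: HuG => /andP[_ /existsP]; case; exists v; rewrite Hrv Heq Hvc.
- have HsB : forall x, x \in B -> s x = m x.
    move=> x; rewrite inE => /and3P[Hr _ /forallP Hall].
    rewrite /s (negbTE Hr); case: ifP => // /existsP[w /andP[Hw Hnw]].
    by move: (Hall w); rewrite Hw (negbTE Hnw).
  by apply: Im => //; rewrite -!HsB.
Qed.
End Hard.


Theorem theorem4 (V : finType) (E : rel V) (r : V) :
  phylo_network E r -> temporal E ->
  (tree_based E r <-> antichain_to_leaf E).
Proof.
move=> Hph [lam Hlam]; have [Hac Hnr Hpar Hret1] := phylo_facts Hph.
split.
- move=> Htb; have [s [Hs Hinj]] := s_of_tb Hnr Htb.
  by apply: atl_of_s Hs Hinj.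
- move=> Hatl; have [s [Hs Hinj]] := s_exists Hac Hret1 Hatl Hlam.
  by apply: tb_of_s Hs Hinj.
Qed.
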